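(* Let $X,Y$ be random variables with $\mathrm{Supp}(X)\subseteq\mathrm{Supp}(Y)=\{x_1,x_2,x_3\}$ (three distinct points). If $(X,Y)\in\mathrm{IC}$, then $X$ and $Y$ have the same distribution or $\mathrm{Corr}(X,Y)=0$.
   Context: $\mathrm{Supp}(X)=\{x:\mathbb P(x-\epsilon<X\le x+\epsilon)>0\ \forall\epsilon>0\}$. $\mathcal L^2$ is the set of non-degenerate real random variables with finite variance. $(X,Y)\in\mathrm{IC}_r$ means $X,Y\in\mathcal L^2$ and $\mathrm{Corr}(X,Y)=\mathrm{Corr}(g(X),g(Y))=r$ for every measurable $g$ with $g(X),g(Y)\in\mathcal L^2$; $\mathrm{IC}=\bigcup_{r\in[-1,1]}\mathrm{IC}_r$. *)

(* Defs.v *)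
From HB Require Import structures.
From mathcomp Require Import all_boot all_order all_algebra.
From mathcomp Require Import all_classical all_reals all_analysis.
Set Implicit Arguments. Unset Strict Implicit. Unset Printing Implicit Defensive.
Import Order.TTheory GRing.Theory Num.Theory.
Local Open Scope classical_set_scope.
Local Open Scope ring_scope.

Section defs.
Context {d : measure_display} {T : measurableType d} {R : realType}.
Variable P : probability T R.

Definition Supp (X : T -> R) : set R :=
  [set x : R | forall e : R, 0 < e ->
     (0 < P (X @^-1` `](x - e)%R, (x + e)%R]))%E].

Definition nondegenerate (X : T -> R) : Prop :=
  ~ (exists c : R, P (X @^-1` [set c]) = 1%E).

Definition L2 (X : T -> R) : Prop :=
  X \in Lfun P 2%:E /\ nondegenerate X.

Definition Corr (X Y : T -> R) : R :=
  fine (covariance P X Y) /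
    Num.sqrt (fine (variance P X) * fine (variance P Y)).

Definition IC_r (r : R) (X Y : T -> R) : Prop :=
  L2 X /\ L2 Y /\ Corr X Y = r /\
  (forall g : R -> R, measurable_fun setT g ->
     L2 (g \o X) -> L2 (g \o Y) -> Corr (g \o X) (g \o Y) = r).

Definition IC (X Y : T -> R) : Prop :=
  exists r : R, -1 <= r <= 1 /\ IC_r r X Y.

Definition same_distribution (X Y : T -> R) : Prop :=
  forall A : set R, measurable A -> P (X @^-1` A) = P (Y @^-1` A).

End defs.

(* Main.v *)
Require Import Defs.
From HB Require Import structures.
From mathcomp Require Import all_boot all_order all_algebra.
From mathcomp Require Import all_classical all_reals all_analysis.
From mathcomp Require Import ring lra measurable_realfun.
Import Order.TTheory GRing.Theory Num.Theory.
Local Open Scope classical_set_scope.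
Local Open Scope ring_scope.

Section Alg.
Context {R : realType}.
Implicit Types (p : nat -> nat -> R) (a : nat -> R).

Lemma coeffs5 (f0 f1 f2 f3 f4 : R) :
  (forall s, f0 + f1*s + f2*(s*s) + f3*(s*s*s) + f4*(s*s*s*s) = 0) ->
  [/\ f0 = 0, f1 = 0, f2 = 0, f3 = 0 & f4 = 0].
Proof.
move=> H; have h0 := H 0; have h1 := H 1; have h2 := H (-1); have h3 := H 2; have h4 := H (-2).
split; lra.
Qed.

Lemma quad0 (a2 e k b0 b1 b2 c0 c1 c2 : R) : 0 < a2 -> 0 < e -> 0 < k ->
  (forall s, (c2*(s*s) + c1*s + c0)^+2 = k*(a2*(s*s)+e)*(b2*(s*s)+b1*s+b0)) ->
  b1 = 0 /\ b0*a2 = e*b2.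
Proof.
move=> a2p ep kp H.
pose F0 := c0^+2 - k*e*b0; pose F1 := 2*c1*c0 - k*e*b1;
pose F2 := c1^+2+2*c2*c0 - k*(a2*b0+e*b2); pose F3 := 2*c2*c1 - k*a2*b1;
pose F4 := c2^+2 - k*a2*b2.
have [f0 f1 f2 f3 f4] : [/\ F0 = 0, F1 = 0, F2 = 0, F3 = 0 & F4 = 0].
  apply: coeffs5 => s; have := H s.
  move=> /eqP h; rewrite -subr_eq0 in h; rewrite -(eqP h) /F0 /F1 /F2 /F3 /F4; ring.
rewrite /F0 /F1 /F2 /F3 /F4 in f0 f1 f2 f3 f4.
have hD : 2*c1*(a2*c0 - e*c2) = 0.
  have -> : 2*c1*(a2*c0 - e*c2) = a2*(2*c1*c0 - k*e*b1) - e*(2*c2*c1 - k*a2*b1) by ring.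
  by rewrite f1 f3; ring.
have hE : a2*e*c1^+2 = (a2*c0 - e*c2)^+2.
  apply/eqP; rewrite -subr_eq0; apply/eqP.
  have -> : a2*e*c1^+2 - (a2*c0 - e*c2)^+2 = a2*e*(c1^+2+2*c2*c0 - k*(a2*b0+e*b2))
     - a2^+2*(c0^+2 - k*e*b0) - e^+2*(c2^+2 - k*a2*b2) by ring.
  by rewrite f0 f2 f4; ring.
have ae : 0 < a2 * e by apply: mulr_gt0.
have [c10 D0] : c1 = 0 /\ a2*c0 - e*c2 = 0.
  have : c1 = 0 \/ a2*c0 - e*c2 = 0.
    move/eqP: hD; rewrite !mulf_eq0 => /orP[/orP[]|]; rewrite ?pnatr_eq0 //.
      by move/eqP; left.
    by move/eqP; right.
  case=> h.
    by split=> //; move: hE; rewrite h expr0n /= mulr0 => /esym/eqP; rewrite sqrf_eq0 => /eqP.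
  split=> //; move: hE; rewrite h expr0n /= => /eqP; rewrite mulf_eq0 (gt_eqF ae) /=.
  by rewrite sqrf_eq0 => /eqP.
split.
  have : k*a2*b1 = 0 by move: f3; rewrite c10 => f3'; lra.
  move/eqP; rewrite !mulf_eq0 (gt_eqF kp) (gt_eqF a2p) /= => /eqP //.
have : k*e*a2*(b0*a2 - e*b2) = 0.
  have -> : k*e*a2*(b0*a2 - e*b2) = -a2^+2*(c0^+2 - k*e*b0) + e^+2*(c2^+2 - k*a2*b2)
     + (a2*c0 - e*c2)*(a2*c0+e*c2) by ring.
  by rewrite f0 f4 D0; ring.
move/eqP; rewrite !mulf_eq0 (gt_eqF kp) (gt_eqF a2p) (gt_eqF ep) /= subr_eq0.
by move/eqP.
Qed.

Lemma quad (a0 a1 a2 b0 b1 b2 c0 c1 c2 k : R) : 0 < a2 -> 0 < 4*a0*a2 - a1^+2 -> 0 < k ->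
  (forall t, (c2*(t*t) + c1*t + c0)^+2 = k*(a2*(t*t)+a1*t+a0)*(b2*(t*t)+b1*t+b0)) ->
  a1*b2 = a2*b1 /\ a0*b2 = a2*b0.
Proof.
move=> a2p dp kp H.
have a2n : a2 != 0 by rewrite gt_eqF.
pose mu := - a1 / (2*a2).
pose e := a0 - a1^+2/(4*a2).
have ep : 0 < e.
  have -> : e = (4*a0*a2 - a1^+2) / (4*a2) by rewrite /e; field.
  by apply: divr_gt0 => //; rewrite mulr_gt0.
case: (quad0 a2 e k (b2*mu*mu + b1*mu + b0) (b1 + 2*b2*mu) b2 (c2*mu*mu+c1*mu+c0) (c1 + 2*c2*mu) c2
   a2p ep kp) => [s|h1 h2].
  have := H (s+mu).
  have -> : c2*((s+mu)*(s+mu)) + c1*(s+mu) + c0 = c2*(s*s) + (c1+2*c2*mu)*s + (c2*mu*mu+c1*mu+c0) by ring.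
  have -> : a2*((s+mu)*(s+mu)) + a1*(s+mu) + a0 = a2*(s*s) + e by rewrite /e /mu; field.
  have -> : b2*((s+mu)*(s+mu)) + b1*(s+mu) + b0 = b2*(s*s) + (b1+2*b2*mu)*s + (b2*mu*mu+b1*mu+b0) by ring.
  by [].
have hb1 : b1 = -2*b2*mu by lra.
split.
  have : a2*b1 - a1*b2 = a2*(b1+2*b2*mu) by rewrite /mu; field.
  by rewrite h1 mulr0 => /eqP; rewrite subr_eq0 => /eqP.
rewrite hb1 in h2.
have : a0*b2 - a2*b0 = e*b2 - (b2*mu*mu + -2*b2*mu*mu + b0)*a2 by rewrite /e /mu; field.
by rewrite h2 subrr => /eqP; rewrite subr_eq0 => /eqP.
Qed.

Lemma core2 (a0 b0 b1 b2 c0 c1 k : R) : 0 < a0 -> 0 < 4*b0*b2 - b1^+2 ->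
  (forall t, (c1*t + c0)^+2 = k*a0*(b2*(t*t)+b1*t+b0)) -> k = 0.
Proof.
move=> a0p dp H.
pose F0 := c0^+2 - k*a0*b0; pose F1 := 2*c1*c0 - k*a0*b1;
pose F2 := c1^+2 - k*a0*b2.
have [f0 f1 f2 _ _] : [/\ F0 = 0, F1 = 0, F2 = 0, (0:R) = 0 & (0:R) = 0].
  apply: coeffs5 => s.
  transitivity ((c1*s+c0)^+2 - k*a0*(b2*(s*s)+b1*s+b0)); first by rewrite /F0 /F1 /F2; ring.
  by rewrite H subrr.
rewrite /F0 /F1 /F2 in f0 f1 f2.
have : (k*a0)^+2 * (4*b0*b2 - b1^+2) = 0.
  have -> : (k*a0)^+2 * (4*b0*b2 - b1^+2) = 4*(c0^+2 - (c0^+2 - k*a0*b0))*(c1^+2 - (c1^+2 - k*a0*b2))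
     - (2*c1*c0 - (2*c1*c0 - k*a0*b1))^+2 by ring.
  by rewrite f0 f1 f2; ring.
move/eqP; rewrite mulf_eq0 (gt_eqF dp) orbF sqrf_eq0 mulf_eq0 (gt_eqF a0p) orbF.
by move/eqP.
Qed.

Lemma sq_eq_pos (x y : R) : 0 < x -> 0 < y -> x^+2 = y^+2 -> x = y.
Proof.
move=> xp yp /eqP; rewrite eqrXn2 ?(ltW xp) ?(ltW yp) //; by move/eqP.
Qed.

Lemma cancel_pos (x y z : R) : 0 < z -> x * z = y * z -> x = y.
Proof. by move=> zp; apply: mulIf; rewrite gt_eqF. Qed.

Lemma marg (P1 P2 P3 Q1 Q2 Q3 l : R) : 0 < P1 -> 0 < P2 -> 0 < P3 ->
  0 < Q1 -> 0 < Q2 -> 0 < Q3 -> P1+P2+P3 = 1 -> Q1+Q2+Q3 = 1 ->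
  Q2*Q3 = l*(P2*P3) -> Q2*(1-Q2) = l*(P2*(1-P2)) -> Q3*(1-Q3) = l*(P3*(1-P3)) ->
  [/\ P1 = Q1, P2 = Q2 & P3 = Q3].
Proof.
move=> p1 p2 p3 q1 q2 q3 sP sQ e23 e2 e3.
have eQ1 : Q1 = 1 - Q2 - Q3 by lra.
have eP1 : P1 = 1 - P2 - P3 by lra.
have h12 : Q1*Q2 = l*(P1*P2).
  rewrite eQ1 eP1; transitivity (Q2*(1-Q2) - Q2*Q3); first ring.
  by rewrite e2 e23; ring.
have h13 : Q1*Q3 = l*(P1*P3).
  rewrite eQ1 eP1; transitivity (Q3*(1-Q3) - Q2*Q3); first ring.
  by rewrite e3 e23; ring.
have s1 : Q1^+2 = l*P1^+2.
  apply: (@cancel_pos _ _ (Q2*Q3)); first exact: mulr_gt0.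
  transitivity ((Q1*Q2)*(Q1*Q3)); first ring.
  by rewrite h12 h13 e23; ring.
have s2 : Q2^+2 = l*P2^+2.
  apply: (@cancel_pos _ _ (Q1*Q3)); first exact: mulr_gt0.
  transitivity ((Q1*Q2)*(Q2*Q3)); first ring.
  by rewrite h12 h13 e23; ring.
have s3 : Q3^+2 = l*P3^+2.
  apply: (@cancel_pos _ _ (Q1*Q2)); first exact: mulr_gt0.
  transitivity ((Q1*Q3)*(Q2*Q3)); first ring.
  by rewrite h12 h13 e23; ring.
have r12 : Q1*P2 = Q2*P1.
  apply: sq_eq_pos; try exact: mulr_gt0.
  by rewrite !exprMn s1 s2; ring.
have r13 : Q1*P3 = Q3*P1.
  apply: sq_eq_pos; try exact: mulr_gt0.
  by rewrite !exprMn s1 s3; ring.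
have E1 : P1 = Q1.
  transitivity (P1*(Q1+Q2+Q3)); first by rewrite sQ mulr1.
  transitivity (Q1*(P1+P2+P3)); last by rewrite sP mulr1.
  transitivity (P1*Q1 + Q2*P1 + Q3*P1); first ring.
  by rewrite -r12 -r13; ring.
split => //.
  apply: (@cancel_pos _ _ P1) => //; rewrite -r12 -E1; ring.
apply: (@cancel_pos _ _ P1) => //; rewrite -r13 -E1; ring.
Qed.

Definition S9 (f : nat -> nat -> R) := f 1%N 1%N + f 1%N 2%N + f 1%N 3%N
  + f 2%N 1%N + f 2%N 2%N + f 2%N 3%N + f 3%N 1%N + f 3%N 2%N + f 3%N 3%N.
Definition meanX p a := S9 (fun i j => a i * p i j).
Definition meanY p a := S9 (fun i j => a j * p i j).
Definition CC p a := S9 (fun i j => (a i - meanX p a) * (a j - meanY p a) * p i j).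
Definition AA p a := S9 (fun i j => (a i - meanX p a)^+2 * p i j).
Definition BB p a := S9 (fun i j => (a j - meanY p a)^+2 * p i j).
Definition Pr p i := p i 1%N + p i 2%N + p i 3%N.
Definition Qc p j := p 1%N j + p 2%N j + p 3%N j.
Definition fam (i k : nat) (t : R) : nat -> R :=
  fun n => if n == i then 1 else if n == k then t else 0.

Lemma p33E p : S9 p = 1 -> p 3%N 3%N = 1 - (p 1%N 1%N + p 1%N 2%N + p 1%N 3%N
  + p 2%N 1%N + p 2%N 2%N + p 2%N 3%N + p 3%N 1%N + p 3%N 2%N).
Proof. by rewrite /S9 => h; lra. Qed.

Lemma AA_nice p a : S9 p = 1 -> AA p a =
  Pr p 1 * a 1%N ^+2 + Pr p 2 * a 2%N ^+2 + Pr p 3 * a 3%N ^+2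
  - (Pr p 1 * a 1%N + Pr p 2 * a 2%N + Pr p 3 * a 3%N)^+2.
Proof. by move=> h; rewrite /AA /meanX /Pr /S9 /= (p33E _ h); ring. Qed.

Lemma BB_nice p a : S9 p = 1 -> BB p a =
  Qc p 1 * a 1%N ^+2 + Qc p 2 * a 2%N ^+2 + Qc p 3 * a 3%N ^+2
  - (Qc p 1 * a 1%N + Qc p 2 * a 2%N + Qc p 3 * a 3%N)^+2.
Proof. by move=> h; rewrite /BB /meanY /Qc /S9 /= (p33E _ h); ring. Qed.

Lemma CC_nice p a : S9 p = 1 -> CC p a =
  S9 (fun i j => p i j * a i * a j)
  - (Pr p 1 * a 1%N + Pr p 2 * a 2%N + Pr p 3 * a 3%N)
   * (Qc p 1 * a 1%N + Qc p 2 * a 2%N + Qc p 3 * a 3%N).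
Proof. by move=> h; rewrite /CC /meanX /meanY /Pr /Qc /S9 /= (p33E _ h); ring. Qed.

Lemma div_sqrt (x y r : R) : r != 0 -> x / Num.sqrt y = r -> x^+2 = r^+2 * y.
Proof.
move=> rn h.
have sn : Num.sqrt y != 0.
  apply/negP => /eqP s0; move: h; rewrite s0 invr0 mulr0 => h0.
  by move: rn; rewrite -h0 eqxx.
have yp : 0 <= y by move: sn; rewrite sqrtr_eq0 -ltNge => /ltW.
have -> : x = r * Num.sqrt y by rewrite -h mulfVK.
by rewrite exprMn sqr_sqrtr.
Qed.

Lemma nondeg_fam (F : nat -> R) (i j k : nat) (t : R) :
  (1 <= i <= 3)%N -> (1 <= j <= 3)%N -> i != j -> j != k ->
  0 < F i -> 0 < F j ->
  forall c, exists n, [/\ (1 <= n <= 3)%N, fam i k t n != c & 0 < F n].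
Proof.
move=> hi hj ij jk Fi Fj c.
have [->|c1] := eqVneq c 1.
  exists j; split=> //; rewrite /fam (eq_sym j i) (negbTE ij) (negbTE jk).
  by rewrite eq_sym oner_eq0.
by exists i; split=> //; rewrite /fam eqxx eq_sym.
Qed.

Lemma lin_lemma (u v a b : R) : a != 0 -> (-2*u)*b = a*(-2*v) -> v = b/a*u.
Proof.
move=> an h; have h' : a * v = b * u by lra.
by rewrite mulrAC -h' mulrAC mulfV // mul1r.
Qed.

Lemma case1_finish (P1 P2 P3 Q1 Q2 Q3 : R) : 0 < P1 -> 0 < P2 -> 0 < P3 ->
  0 < Q1 -> 0 < Q2 -> 0 < Q3 -> P1+P2+P3 = 1 -> Q1+Q2+Q3 = 1 ->
  (-2*(P2*P3)) * (Q3*(1-Q3)) = (P3*(1-P3)) * (-2*(Q2*Q3)) ->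
  (P2*(1-P2))*(Q3*(1-Q3)) = (P3*(1-P3))*(Q2*(1-Q2)) ->
  [/\ P1 = Q1, P2 = Q2 & P3 = Q3].
Proof.
move=> p1 p2 p3 q1 q2 q3 sP sQ h1 h2.
have a2p : 0 < P3*(1-P3) by apply: mulr_gt0 => //; lra.
have a2n : P3*(1-P3) != 0 by rewrite gt_eqF.
apply: (@marg P1 P2 P3 Q1 Q2 Q3 (Q3*(1-Q3)/(P3*(1-P3)))) => //.
- exact: lin_lemma.
- apply: (@cancel_pos _ _ (P3*(1-P3))) => //.
  rewrite [RHS]mulrAC mulfVK //; lra.
- by rewrite mulfVK.
Qed.

Lemma eq_by (x y x' y' : R) : x = y -> x' = x -> y = y' -> x' = y'.
Proof. by move=> -> -> ->. Qed.
Arguments eq_by {x y x' y'}.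

Lemma pos4 (x y z : R) : 0 < x -> 0 < y -> 0 < z -> 0 < 4*x*y*z*(x+y+z).
Proof.
move=> xp yp zp; apply: mulr_gt0; last by rewrite !addr_gt0.
by rewrite !mulr_gt0.
Qed.

Lemma alg_main p r :
  (forall i j, 0 <= p i j) -> S9 p = 1 ->
  0 < Qc p 1 -> 0 < Qc p 2 -> 0 < Qc p 3 ->
  Pr p 1 != 1 -> Pr p 2 != 1 -> Pr p 3 != 1 ->
  (forall a, (forall c, exists i, [/\ (1 <= i <= 3)%N, a i != c & 0 < Pr p i]) ->
             (forall c, exists j, [/\ (1 <= j <= 3)%N, a j != c & 0 < Qc p j]) ->
             CC p a / Num.sqrt (AA p a * BB p a) = r) ->
  r = 0 \/ [/\ Pr p 1 = Qc p 1, Pr p 2 = Qc p 2 & Pr p 3 = Qc p 3].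
Proof.
move=> hnn hS q1 q2 q3 n1 n2 n3 H.
have [->|rn] := eqVneq r 0; first by left.
right.
have sP : Pr p 1 + Pr p 2 + Pr p 3 = 1 by move: hS; rewrite /S9 /Pr; lra.
have sQ : Qc p 1 + Qc p 2 + Qc p 3 = 1 by move: hS; rewrite /S9 /Qc; lra.
have Pge : forall i, 0 <= Pr p i.
  by move=> i; rewrite /Pr; have := hnn i 1%N; have := hnn i 2%N; have := hnn i 3%N; lra.
have key : forall i j k t, (1 <= i <= 3)%N -> (1 <= j <= 3)%N -> i != j -> j != k ->
   0 < Pr p i -> 0 < Pr p j -> 0 < Qc p i -> 0 < Qc p j ->
   CC p (fam i k t)^+2 = r^+2 * (AA p (fam i k t) * BB p (fam i k t)).
  move=> i j k t hi hj ij jk pi pj qi qj; apply: div_sqrt rn _; apply: H.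
    exact: (@nondeg_fam (Pr p) i j k t hi hj ij jk pi pj).
  exact: (@nondeg_fam (Qc p) i j k t hi hj ij jk qi qj).
have kp : 0 < r^+2 by rewrite exprn_even_gt0 //= rn orbT.
have [P10|P1p] : Pr p 1 = 0 \/ 0 < Pr p 1.
  by have := Pge 1%N; rewrite le_eqVlt => /orP[/eqP->|]; [left|right].
  exfalso.
  have Pk0 : Pr p 1%N = 0 by [].
  have [pk1 pk2 pk3] : [/\ p 1%N 1%N = 0, p 1%N 2%N = 0 & p 1%N 3%N = 0].
    move: Pk0; rewrite /Pr; have := hnn 1%N 1%N; have := hnn 1%N 2%N; have := hnn 1%N 3%N.
    move=> *; split; lra.
  have Pj1 : Pr p 3%N < 1.
    rewrite lt_neqAle; apply/andP; split; [by [] | have := Pge 2%N; have := Pge 3%N; have := Pge 1%N; lra].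
  have Pi1 : Pr p 2%N < 1.
    rewrite lt_neqAle; apply/andP; split; [by [] | have := Pge 2%N; have := Pge 3%N; have := Pge 1%N; lra].
  have Pip : 0 < Pr p 2%N by lra.
  have Pjp : 0 < Pr p 3%N by lra.
  have a0p : 0 < Pr p 2%N * (1 - Pr p 2%N) by apply: mulr_gt0; lra.
  have dp : 0 < 4 * (Qc p 2%N * (1 - Qc p 2%N)) * (Qc p 1%N * (1 - Qc p 1%N)) - (-2 * (Qc p 2%N * Qc p 1%N))^+2.
    have -> : Qc p 2%N * (1 - Qc p 2%N) = Qc p 2%N * (Qc p 3%N + Qc p 1%N) by congr (_ * _); lra.
    have -> : Qc p 1%N * (1 - Qc p 1%N) = Qc p 1%N * (Qc p 3%N + Qc p 2%N) by congr (_ * _); lra.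
    have -> : forall x y z : R, 4 * (x * (z + y)) * (y * (z + x)) - (-2 * (x * y))^+2 = 4 * x * y * z * (x + y + z)
      by move=> x y z; ring.
    by apply: pos4.
  have hq : forall t, ((p 2%N 1%N + p 1%N 2%N - Pr p 2%N * Qc p 1%N - Pr p 1%N * Qc p 2%N) * t + (p 2%N 2%N - Pr p 2%N * Qc p 2%N))^+2
     = r^+2 * (Pr p 2%N * (1 - Pr p 2%N)) * ((Qc p 1%N * (1 - Qc p 1%N)) * (t * t)
          + (-2 * (Qc p 2%N * Qc p 1%N)) * t + Qc p 2%N * (1 - Qc p 2%N)).
    move=> t; have := key 2%N 3%N 1%N t isT isT isT isT Pip Pjp ltac:(assumption) ltac:(assumption).
    rewrite CC_nice // AA_nice // BB_nice // /fam /S9 /= ?Pk0 ?pk1 ?pk2 ?pk3 => h.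
    by refine (eq_by h _ _); ring.
  have := (core2 _ _ _ _ _ _ _ a0p dp hq); move/eqP; by rewrite sqrf_eq0 (negbTE rn).
have [P20|P2p] : Pr p 2 = 0 \/ 0 < Pr p 2.
  by have := Pge 2%N; rewrite le_eqVlt => /orP[/eqP->|]; [left|right].
  exfalso.
  have Pk0 : Pr p 2%N = 0 by [].
  have [pk1 pk2 pk3] : [/\ p 2%N 1%N = 0, p 2%N 2%N = 0 & p 2%N 3%N = 0].
    move: Pk0; rewrite /Pr; have := hnn 2%N 1%N; have := hnn 2%N 2%N; have := hnn 2%N 3%N.
    move=> *; split; lra.
  have Pj1 : Pr p 3%N < 1.
    rewrite lt_neqAle; apply/andP; split; [by [] | have := Pge 1%N; have := Pge 3%N; have := Pge 2%N; lra].
  have Pi1 : Pr p 1%N < 1.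
    rewrite lt_neqAle; apply/andP; split; [by [] | have := Pge 1%N; have := Pge 3%N; have := Pge 2%N; lra].
  have Pip : 0 < Pr p 1%N by lra.
  have Pjp : 0 < Pr p 3%N by lra.
  have a0p : 0 < Pr p 1%N * (1 - Pr p 1%N) by apply: mulr_gt0; lra.
  have dp : 0 < 4 * (Qc p 1%N * (1 - Qc p 1%N)) * (Qc p 2%N * (1 - Qc p 2%N)) - (-2 * (Qc p 1%N * Qc p 2%N))^+2.
    have -> : Qc p 1%N * (1 - Qc p 1%N) = Qc p 1%N * (Qc p 3%N + Qc p 2%N) by congr (_ * _); lra.
    have -> : Qc p 2%N * (1 - Qc p 2%N) = Qc p 2%N * (Qc p 3%N + Qc p 1%N) by congr (_ * _); lra.
    have -> : forall x y z : R, 4 * (x * (z + y)) * (y * (z + x)) - (-2 * (x * y))^+2 = 4 * x * y * z * (x + y + z)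
      by move=> x y z; ring.
    by apply: pos4.
  have hq : forall t, ((p 1%N 2%N + p 2%N 1%N - Pr p 1%N * Qc p 2%N - Pr p 2%N * Qc p 1%N) * t + (p 1%N 1%N - Pr p 1%N * Qc p 1%N))^+2
     = r^+2 * (Pr p 1%N * (1 - Pr p 1%N)) * ((Qc p 2%N * (1 - Qc p 2%N)) * (t * t)
          + (-2 * (Qc p 1%N * Qc p 2%N)) * t + Qc p 1%N * (1 - Qc p 1%N)).
    move=> t; have := key 1%N 3%N 2%N t isT isT isT isT Pip Pjp ltac:(assumption) ltac:(assumption).
    rewrite CC_nice // AA_nice // BB_nice // /fam /S9 /= ?Pk0 ?pk1 ?pk2 ?pk3 => h.
    by refine (eq_by h _ _); ring.
  have := (core2 _ _ _ _ _ _ _ a0p dp hq); move/eqP; by rewrite sqrf_eq0 (negbTE rn).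
have [P30|P3p] : Pr p 3 = 0 \/ 0 < Pr p 3.
  by have := Pge 3%N; rewrite le_eqVlt => /orP[/eqP->|]; [left|right].
  exfalso.
  have Pk0 : Pr p 3%N = 0 by [].
  have [pk1 pk2 pk3] : [/\ p 3%N 1%N = 0, p 3%N 2%N = 0 & p 3%N 3%N = 0].
    move: Pk0; rewrite /Pr; have := hnn 3%N 1%N; have := hnn 3%N 2%N; have := hnn 3%N 3%N.
    move=> *; split; lra.
  have Pj1 : Pr p 1%N < 1.
    rewrite lt_neqAle; apply/andP; split; [by [] | have := Pge 2%N; have := Pge 1%N; have := Pge 3%N; lra].
  have Pi1 : Pr p 2%N < 1.
    rewrite lt_neqAle; apply/andP; split; [by [] | have := Pge 2%N; have := Pge 1%N; have := Pge 3%N; lra].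
  have Pip : 0 < Pr p 2%N by lra.
  have Pjp : 0 < Pr p 1%N by lra.
  have a0p : 0 < Pr p 2%N * (1 - Pr p 2%N) by apply: mulr_gt0; lra.
  have dp : 0 < 4 * (Qc p 2%N * (1 - Qc p 2%N)) * (Qc p 3%N * (1 - Qc p 3%N)) - (-2 * (Qc p 2%N * Qc p 3%N))^+2.
    have -> : Qc p 2%N * (1 - Qc p 2%N) = Qc p 2%N * (Qc p 1%N + Qc p 3%N) by congr (_ * _); lra.
    have -> : Qc p 3%N * (1 - Qc p 3%N) = Qc p 3%N * (Qc p 1%N + Qc p 2%N) by congr (_ * _); lra.
    have -> : forall x y z : R, 4 * (x * (z + y)) * (y * (z + x)) - (-2 * (x * y))^+2 = 4 * x * y * z * (x + y + z)
      by move=> x y z; ring.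
    by apply: pos4.
  have hq : forall t, ((p 2%N 3%N + p 3%N 2%N - Pr p 2%N * Qc p 3%N - Pr p 3%N * Qc p 2%N) * t + (p 2%N 2%N - Pr p 2%N * Qc p 2%N))^+2
     = r^+2 * (Pr p 2%N * (1 - Pr p 2%N)) * ((Qc p 3%N * (1 - Qc p 3%N)) * (t * t)
          + (-2 * (Qc p 2%N * Qc p 3%N)) * t + Qc p 2%N * (1 - Qc p 2%N)).
    move=> t; have := key 2%N 1%N 3%N t isT isT isT isT Pip Pjp ltac:(assumption) ltac:(assumption).
    rewrite CC_nice // AA_nice // BB_nice // /fam /S9 /= ?Pk0 ?pk1 ?pk2 ?pk3 => h.
    by refine (eq_by h _ _); ring.
  have := (core2 _ _ _ _ _ _ _ a0p dp hq); move/eqP; by rewrite sqrf_eq0 (negbTE rn).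
have hq : forall t, ((p 3%N 3%N - Pr p 3 * Qc p 3) * (t * t)
     + (p 2%N 3%N + p 3%N 2%N - Pr p 2 * Qc p 3 - Pr p 3 * Qc p 2) * t + (p 2%N 2%N - Pr p 2 * Qc p 2))^+2
   = r^+2 * ((Pr p 3 * (1 - Pr p 3)) * (t * t) + (-2 * (Pr p 2 * Pr p 3)) * t + Pr p 2 * (1 - Pr p 2))
     * ((Qc p 3 * (1 - Qc p 3)) * (t * t) + (-2 * (Qc p 2 * Qc p 3)) * t + Qc p 2 * (1 - Qc p 2)).
  move=> t; have := key 2%N 1%N 3%N t isT isT isT isT P2p P1p q2 q1.
  rewrite CC_nice // AA_nice // BB_nice // /fam /S9 /= => h.
  by refine (eq_by h _ _); ring.
have a2p : 0 < Pr p 3 * (1 - Pr p 3) by apply: mulr_gt0; lra.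
have dp : 0 < 4 * (Pr p 2 * (1 - Pr p 2)) * (Pr p 3 * (1 - Pr p 3)) - (-2 * (Pr p 2 * Pr p 3))^+2.
  have -> : Pr p 2 * (1 - Pr p 2) = Pr p 2 * (Pr p 1 + Pr p 3) by congr (_ * _); lra.
  have -> : Pr p 3 * (1 - Pr p 3) = Pr p 3 * (Pr p 1 + Pr p 2) by congr (_ * _); lra.
  have -> : forall x y z : R, 4 * (x * (z + y)) * (y * (z + x)) - (-2 * (x * y))^+2 = 4 * x * y * z * (x + y + z)
    by move=> x y z; ring.
  by apply: pos4.
have [h1 h2] := (quad _ _ _ _ _ _ _ _ _ _ a2p dp kp hq).
have [] := (case1_finish _ _ _ _ _ _ P1p P2p P3p q1 q2 q3 sP sQ h1 h2).
by [].
Qed.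

End Alg.

Section Meas.
Context (d : measure_display) (T : measurableType d) (R : realType).
Variable P : probability T R.
Variables (X Y : T -> R) (x1 x2 x3 : R).
Hypotheses (mX : measurable_fun setT X) (mY : measurable_fun setT Y).
Hypotheses (n12 : x1 != x2) (n13 : x1 != x3) (n23 : x2 != x3).

Definition xs (i : nat) : R := if i == 1%N then x1 else if i == 2%N then x2 else x3.
Definition Sx : set R := [set x1; x2; x3].
Definition Ev (i j : nat) : set T := X @^-1` [set xs i] `&` Y @^-1` [set xs j].
Definition pr (i j : nat) : R := fine (P (Ev i j)).
Definition idx9 : seq (nat * nat) := [:: (1,1); (1,2); (1,3); (2,1); (2,2); (2,3); (3,1); (3,2); (3,3)]%N.

Lemma mpre (Z : T -> R) (mZ : measurable_fun setT Z) (A : set R) :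
  measurable A -> measurable (Z @^-1` A).
Proof. by move=> mA; rewrite -[Z @^-1` A]setTI; exact: mZ. Qed.

Lemma mEv i j : measurable (Ev i j).
Proof. by apply: measurableI; apply: mpre => //; exact: measurable_set1. Qed.

Lemma PEv i j : P (Ev i j) = (pr i j)%:E.
Proof. by rewrite /pr fineK // fin_num_measure //; exact: mEv. Qed.

Lemma pr_ge0 i j : 0 <= pr i j.
Proof. by rewrite /pr fine_ge0 // measure_ge0. Qed.

Lemma sum_idx9 (f : nat -> nat -> R) : \sum_(ij <- idx9) f ij.1 ij.2 = S9 f.
Proof. by rewrite /idx9 !big_cons big_nil /S9 /=; lra. Qed.

Lemma indEv i j w : \1_(Ev i j) w = ((X w == xs i) && (Y w == xs j))%:R :> R.
Proof.
rewrite indicE /Ev.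
suff -> : (w \in X @^-1` [set xs i] `&` Y @^-1` [set xs j]) = ((X w == xs i) && (Y w == xs j)) by [].
apply/idP/idP.
  by rewrite inE => -[/= -> ->]; rewrite !eqxx.
by move=> /andP[/eqP a /eqP b]; rewrite inE; split.
Qed.

Lemma E_simple (h : R -> R -> R) :
  P (X @^-1` (~` Sx)) = 0%E -> P (Y @^-1` (~` Sx)) = 0%E ->
  measurable_fun setT (fun w => h (X w) (Y w)) ->
  ('E_P[fun w => h (X w) (Y w)])%E = (S9 (fun i j => h (xs i) (xs j) * pr i j))%:E.
Proof.
move=> PX PY mh.
rewrite unlock.
have mS : measurable Sx.
  by rewrite /Sx; apply: measurableU; [apply: measurableU|]; exact: measurable_set1.
rewrite (ae_eq_integral (mu:=P) (D:=setT) (fun w => \sum_(ij <- idx9) (h (xs ij.1) (xs ij.2) * \1_(Ev ij.1 ij.2) w)%:E)) //.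
- rewrite integral_sum //; last first.
    move=> ij; under eq_fun do rewrite EFinM.
    by apply: integrableZl => //; apply: integrable_indic; exact: mEv.
  rewrite -(sum_idx9 (fun i j => h (xs i) (xs j) * pr i j)) -sumEFin.
  apply: eq_bigr => ij _.
  under eq_integral do rewrite EFinM.
  rewrite integralZl //; last by apply: integrable_indic; exact: mEv.
  rewrite integral_indic ?setIT; last exact: mEv. rewrite /pr EFinM fineK //; apply: fin_num_measure; exact: mEv.
- exact: measurableT.
- by apply: measurableT_comp.
- apply: emeasurable_sum => ij; apply: measurableT_comp => //.
  by apply: measurable_funM => //; apply: measurable_indic; exact: mEv.
- apply: (@negligibleS _ _ _ _ (X @^-1` (~` Sx) `|` Y @^-1` (~` Sx))).
    move=> w /= hw; apply: contrapT => hw'; apply: hw => _.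
    have [hX hY] : Sx (X w) /\ Sx (Y w).
      by split; apply: contrapT => h'; apply: hw'; [left|right].
    rewrite sumEFin; congr (_%:E).
    rewrite /idx9 !big_cons big_nil !indEv /xs /=.
    have e12 : (x1 == x2) = false := negbTE n12.
    have e13 : (x1 == x3) = false := negbTE n13.
    have e23 : (x2 == x3) = false := negbTE n23.
    have e21 : (x2 == x1) = false by rewrite eq_sym.
    have e31 : (x3 == x1) = false by rewrite eq_sym.
    have e32 : (x3 == x2) = false by rewrite eq_sym.
    case: hX => [[->|->]|->]; case: hY => [[->|->]|->];
      rewrite ?eqxx ?e12 ?e13 ?e23 ?e21 ?e31 ?e32 /=; ring.
  apply: negligibleU; apply/negligibleP => //; apply: mpre => //; exact: measurableC.
Qed.


Lemma Lfun_bdd (f : T -> R) (M : R) : measurable_fun setT f ->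
  (forall w, `|f w| <= M) -> f \in Lfun P 2%:E.
Proof.
move=> mf fM.
rewrite inE; apply/andP; split; first by rewrite inE.
rewrite inE /= /finite_norm unlock poweR_lty //.
apply: (@le_lt_trans _ _ (\int[P]_x (M `^ 2)%:E)%E).
  apply: ge0_le_integral => //.
  - by move=> x _; apply: poweR_ge0.
  - apply: measurableT_comp => //.
    change (measurable_fun setT ((@powR R ^~ 2) \o ((@Num.norm _ R) \o f))).
    apply: measurableT_comp; first exact: measurable_powR.
    exact: measurableT_comp.
  - move=> x _; change ((`|f x| `^ 2)%:E <= (M `^ 2)%:E)%E; rewrite lee_fin.
    apply: ge0_ler_powR => //; rewrite ?nnegrE //; exact: (le_trans _ (fM x)).
rewrite integral_cst //= probability_setT mule1; exact: ltry.
Qed.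


Section supp.
Variables (Z : T -> R) (mZ : measurable_fun setT Z).

Definition cell (n : nat) (z : int) : set R :=
  `[(z%:~R / n.+1%:R), ((z + 1)%:~R / n.+1%:R)[%classic.

Definition Gc n z : set T :=
  if P (Z @^-1` cell n z) == 0%E then Z @^-1` cell n z else set0.

Lemma Gc_negl n z : P.-negligible (Gc n z).
Proof.
rewrite /Gc; case: ifPn => [/eqP h|_]; last exact: negligible_set0.
by apply/negligibleP => //; apply: mpre => //; exact: measurable_itv.
Qed.

Lemma supp_negl : P.-negligible (Z @^-1` (~` Supp P Z)).
Proof.
apply: (@negligibleS _ _ _ _
  (\bigcup_n (\bigcup_m Gc n (Posz m) `|` \bigcup_m Gc n (Negz m)))); last first.
  apply: negligible_bigcup => n; apply: negligibleU; apply: negligible_bigcup => m;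
  exact: Gc_negl.
move=> w /= nS.
have [e [e0 Pe]] : exists e : R, 0 < e /\ P (Z @^-1` `](Z w - e), (Z w + e)]%classic) = 0%E.
  apply: contrapT => hne; apply: nS => e e0.
  rewrite lt_neqAle measure_ge0 andbT eq_sym; apply/negP => /eqP h.
  by apply: hne; exists e.
set x := Z w.
pose n := Num.truncn (e^-1).
have hn : e^-1 < n.+1%:R by apply: real_truncnS_gt; exact: num_real.
have np : 0 < n.+1%:R :> R by [].
have hn' : n.+1%:R^-1 < e.
  by rewrite -(invrK e) ltf_pV2 ?posrE ?invr_gt0.
pose z := Num.floor (x * n.+1%:R).
have hz1 : z%:~R <= x * n.+1%:R by apply: real_floor_le; exact: num_real.
have hz2 : x * n.+1%:R < (z + 1)%:~R by apply: real_floorD1_gt; exact: num_real.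
have lo : z%:~R / n.+1%:R <= x by rewrite ler_pdivrMr.
have hi : x < (z + 1)%:~R / n.+1%:R by rewrite ltr_pdivlMr.
have ez : (z + 1)%:~R / n.+1%:R = z%:~R / n.+1%:R + n.+1%:R^-1 :> R.
  by rewrite intrD mulrDl div1r.
have incl : cell n z `<=` `](x - e), (x + e)]%classic.
  move=> y; rewrite /cell /= !in_itv /= => /andP[y1 y2]; apply/andP.
  move: y1 y2 hi lo hn' ez; set B := (z + 1)%:~R / n.+1%:R; set A := z%:~R / n.+1%:R; set C := n.+1%:R^-1.
  move=> *; split; lra.
have P0 : P (Z @^-1` cell n z) = 0%E.
  apply/eqP; rewrite -measure_le0 -Pe; apply: le_measure; rewrite ?inE.
  - by apply: mpre => //; exact: measurable_itv.
  - by apply: mpre => //; exact: measurable_itv.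
  - by move=> t /= /incl.
have wG : Gc n z w by rewrite /Gc P0 eqxx /cell /= in_itv /= lo hi.
exists n => //.
by case E: z wG => [m|m] wG; [left|right]; exists m.
Qed.

End supp.

Lemma mSx : measurable Sx.
Proof. by rewrite /Sx; apply: measurableU; [apply: measurableU|]; exact: measurable_set1. Qed.

Lemma null_out (Z : T -> R) (mZ : measurable_fun setT Z) :
  Supp P Z `<=` Sx -> P (Z @^-1` (~` Sx)) = 0%E.
Proof.
move=> hS; apply/negligibleP; first by apply: mpre => //; apply: measurableC; exact: mSx.
apply: (negligibleS _ (@supp_negl Z mZ)) => w /= nw hw; apply: nw; exact: hS.
Qed.

Lemma indic1 (c y : R) : \1_[set c] y = (y == c)%:R :> R.
Proof.
rewrite indicE; suff -> : (y \in [set c]) = (y == c) by [].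
by apply/idP/idP; [rewrite inE => /= ->|move/eqP->; rewrite inE].
Qed.

Definition gf (a : nat -> R) (x : R) : R :=
  a 1%N * \1_[set x1] x + a 2%N * \1_[set x2] x + a 3%N * \1_[set x3] x.

Lemma e12 : (x1 == x2) = false. Proof. exact: negbTE. Qed.
Lemma e13 : (x1 == x3) = false. Proof. exact: negbTE. Qed.
Lemma e23 : (x2 == x3) = false. Proof. exact: negbTE. Qed.
Lemma e21 : (x2 == x1) = false. Proof. by rewrite eq_sym e12. Qed.
Lemma e31 : (x3 == x1) = false. Proof. by rewrite eq_sym e13. Qed.
Lemma e32 : (x3 == x2) = false. Proof. by rewrite eq_sym e23. Qed.

Lemma gx1 a : gf a x1 = a 1%N.
Proof. by rewrite /gf !indic1 eqxx e12 e13 /=; ring. Qed.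
Lemma gx2 a : gf a x2 = a 2%N.
Proof. by rewrite /gf !indic1 eqxx e21 e23 /=; ring. Qed.
Lemma gx3 a : gf a x3 = a 3%N.
Proof. by rewrite /gf !indic1 eqxx e31 e32 /=; ring. Qed.

Lemma mgf a : measurable_fun setT (gf a).
Proof.
apply: measurable_funD; first apply: measurable_funD.
all: apply: measurable_funM => //; apply: measurable_indic; exact: measurable_set1.
Qed.

Lemma gf_bdd a x : `|gf a x| <= `|a 1%N| + `|a 2%N| + `|a 3%N|.
Proof.
have h : forall (b c : R), `|b * \1_[set c] x| <= `|b|.
  move=> b c; rewrite normrM indic1; case: (x == c) => /=.
    by rewrite normr1 mulr1.
  by rewrite normr0 mulr0.
rewrite /gf; apply: (le_trans (ler_normD _ _)); apply: lerD; last exact: h.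
apply: (le_trans (ler_normD _ _)); apply: lerD; exact: h.
Qed.

Section ae.
Hypotheses (PX0 : P (X @^-1` (~` Sx)) = 0%E) (PY0 : P (Y @^-1` (~` Sx)) = 0%E).

Lemma E_simple' (F : T -> R) (h : R -> R -> R) :
  (forall w, F w = h (X w) (Y w)) -> measurable_fun setT F ->
  ('E_P[F])%E = (S9 (fun i j => h (xs i) (xs j) * pr i j))%:E.
Proof.
move=> hF mF; have eF : F = (fun w => h (X w) (Y w)) by apply/funext.
by rewrite eF E_simple //; rewrite -eF.
Qed.

Lemma PXA A : measurable A ->
  P (X @^-1` A) = (S9 (fun i j => \1_A (xs i) * pr i j))%:E.
Proof.
move=> mA; rewrite -expectation_indic; last exact: mpre.
apply: (@E_simple' _ (fun u v => \1_A u)) => //.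
by apply: measurable_indic; exact: mpre.
Qed.

Lemma PYA A : measurable A ->
  P (Y @^-1` A) = (S9 (fun i j => \1_A (xs j) * pr i j))%:E.
Proof.
move=> mA; rewrite -expectation_indic; last exact: mpre.
apply: (@E_simple' _ (fun u v => \1_A v)) => //.
by apply: measurable_indic; exact: mpre.
Qed.

Lemma S9pr1 : S9 pr = 1.
Proof.
have := @E_simple' (cst 1) (fun _ _ => 1) (fun _ => erefl) (measurable_cst _).
rewrite expectation_cst => /esym [].
by rewrite /S9 !mul1r.
Qed.

Lemma rowX i : (1 <= i <= 3)%N -> P (X @^-1` [set xs i]) = (Pr pr i)%:E.
Proof.
move=> hi; rewrite PXA; last exact: measurable_set1.
congr (_%:E); rewrite /S9 /Pr !indic1.
case: i hi => [|[|[|[|]]]] //= _; rewrite /xs /= ?eqxx ?e12 ?e13 ?e23 ?e21 ?e31 ?e32 /=; ring.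
Qed.

Lemma colY i : (1 <= i <= 3)%N -> P (Y @^-1` [set xs i]) = (Qc pr i)%:E.
Proof.
move=> hi; rewrite PYA; last exact: measurable_set1.
congr (_%:E); rewrite /S9 /Qc !indic1.
case: i hi => [|[|[|[|]]]] //= _; rewrite /xs /= ?eqxx ?e12 ?e13 ?e23 ?e21 ?e31 ?e32 /=; ring.
Qed.

Lemma gxs_sum (f : nat -> nat -> R -> R -> R) a :
  S9 (fun i j => f i j (gf a (xs i)) (gf a (xs j))) = S9 (fun i j => f i j (a i) (a j)).
Proof. by rewrite /S9 /xs /= !gx1 !gx2 !gx3. Qed.

Lemma Corr_g a : Corr P (gf a \o X) (gf a \o Y) = CC pr a / Num.sqrt (AA pr a * BB pr a).
Proof.
have mgX : measurable_fun setT (gf a \o X) by apply: measurableT_comp => //; exact: mgf.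
have mgY : measurable_fun setT (gf a \o Y) by apply: measurableT_comp => //; exact: mgf.
have EX : ('E_P[gf a \o X])%E = (meanX pr a)%:E.
  rewrite (@E_simple' _ (fun u v => gf a u)) //.
  by rewrite (gxs_sum (fun i j u v => u * pr i j)).
have EY : ('E_P[gf a \o Y])%E = (meanY pr a)%:E.
  rewrite (@E_simple' _ (fun u v => gf a v)) //.
  by rewrite (gxs_sum (fun i j u v => v * pr i j)).
have cov : covariance P (gf a \o X) (gf a \o Y) = (CC pr a)%:E.
  rewrite covariance.unlock EX EY /=.
  rewrite (@E_simple' _ (fun u v => (gf a u - meanX pr a) * (gf a v - meanY pr a))) //.
    by rewrite (gxs_sum (fun i j u v => (u - meanX pr a) * (v - meanY pr a) * pr i j)).
  by apply: measurable_funM; apply: measurable_funB.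
have vX : variance P (gf a \o X) = (AA pr a)%:E.
  rewrite /variance covariance.unlock EX /=.
  rewrite (@E_simple' _ (fun u v => (gf a u - meanX pr a)^+2)) //.
    by rewrite (gxs_sum (fun i j u v => (u - meanX pr a)^+2 * pr i j)).
  by apply: measurable_funM; apply: measurable_funB.
have vY : variance P (gf a \o Y) = (BB pr a)%:E.
  rewrite /variance covariance.unlock EY /=.
  rewrite (@E_simple' _ (fun u v => (gf a v - meanY pr a)^+2)) //.
    by rewrite (gxs_sum (fun i j u v => (v - meanY pr a)^+2 * pr i j)).
  by apply: measurable_funM; apply: measurable_funB.
by rewrite /Corr cov vX vY.
Qed.

Lemma nondeg_gen (Z : T -> R) (mZ : measurable_fun setT Z) (F : nat -> R) a :
  (forall i, (1 <= i <= 3)%N -> P (Z @^-1` [set xs i]) = (F i)%:E) ->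
  (forall c, exists i, [/\ (1 <= i <= 3)%N, a i != c & 0 < F i]) ->
  Defs.nondegenerate P (gf a \o Z).
Proof.
move=> hF H [c Pc].
have [i [hi ai Fi]] := H c.
have mG : measurable ((gf a \o Z) @^-1` [set c]).
  by apply: mpre; [apply: measurableT_comp => //; exact: mgf|exact: measurable_set1].
have PC : P (~` ((gf a \o Z) @^-1` [set c])) = 0%E by rewrite probability_setC // Pc subee.
have : (P (Z @^-1` [set xs i]) <= P (~` ((gf a \o Z) @^-1` [set c])))%E.
  apply: le_measure; rewrite ?inE.
  - by apply: mpre => //; exact: measurable_set1.
  - exact: measurableC.
  move=> w /= ->; apply/eqP.
  have -> : gf a (xs i) = a i.
    by case: i hi ai Fi => [|[|[|[|]]]] //= _ _ _; rewrite /xs /= ?gx1 ?gx2 ?gx3.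
  exact: ai.
by rewrite hF // PC lee_fin leNgt Fi.
Qed.

Lemma far_indic (c y e : R) : e < `|y - c| -> \1_(`](c - e), (c + e)]%classic) y = 0 :> R.
Proof.
move=> far; rewrite indicE; case: (boolP (y \in _)) => //.
move=> /set_mem /=; rewrite in_itv /= => /andP[h1 h2]; exfalso.
move: far; rewrite ltNge => /negP; apply; rewrite ler_norml; apply/andP; split; lra.
Qed.

Lemma near_indic (c e : R) : 0 < e -> \1_(`](c - e), (c + e)]%classic) c = 1 :> R.
Proof.
move=> ep; rewrite indicE; case: (boolP (c \in _)) => //.
move/negP; apply: contra_notP => _; apply/mem_set => /=.
by rewrite in_itv /= ltrBlDr ltrDl ep lerDl (ltW ep).
Qed.

Lemma Qc_pos k : (1 <= k <= 3)%N -> Supp P Y (xs k) -> 0 < Qc pr k.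
Proof.
move=> hk hs.
pose m := Num.min (Num.min `|x1 - x2| `|x1 - x3|) `|x2 - x3|.
have mp : 0 < m by rewrite !lt_min !normr_gt0 !subr_eq0 n12 n13 n23.
have m1 : m <= `|x1 - x2| by rewrite !ge_min lexx.
have m2 : m <= `|x1 - x3| by rewrite !ge_min lexx orbT.
have m3 : m <= `|x2 - x3| by rewrite !ge_min lexx orbT.
pose e := m / 2.
have ep : 0 < e by rewrite divr_gt0.
have em : e < m by rewrite /e ltr_pdivrMr // ltr_pMr // ltr1n.
have f12 : e < `|x1 - x2| by apply: lt_le_trans m1.
have f13 : e < `|x1 - x3| by apply: lt_le_trans m2.
have f23 : e < `|x2 - x3| by apply: lt_le_trans m3.
have f21 : e < `|x2 - x1| by rewrite distrC.
have f31 : e < `|x3 - x1| by rewrite distrC.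
have f32 : e < `|x3 - x2| by rewrite distrC.
have := hs e ep.
rewrite PYA; last exact: measurable_itv.
rewrite lte_fin /S9 /Qc.
case: k hk {hs} => [|[|[|[|]]]] //= _; rewrite /xs /=.
- rewrite near_indic // (far_indic _ _ _ f21) (far_indic _ _ _ f31) => h; lra.
- rewrite near_indic // (far_indic _ _ _ f12) (far_indic _ _ _ f32) => h; lra.
- rewrite near_indic // (far_indic _ _ _ f13) (far_indic _ _ _ f23) => h; lra.
Qed.

End ae.

Lemma inner (r : R) : Supp P Y = Sx -> Supp P X `<=` Supp P Y ->
  Defs.nondegenerate P X -> IC_r P r X Y ->
  same_distribution P X Y \/ Corr P X Y = 0.
Proof.
move=> hSY hXY nX [L2X [L2Y [Cr Hg]]].
have PY0 : P (Y @^-1` (~` Sx)) = 0%E by apply: null_out => //; rewrite hSY.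
have PX0 : P (X @^-1` (~` Sx)) = 0%E by apply: null_out => //; rewrite -hSY.
have q1 : 0 < Qc pr 1 by apply: (@Qc_pos PX0 PY0 1%N) => //; rewrite hSY /Sx /xs /=; left; left.
have q2 : 0 < Qc pr 2 by apply: (@Qc_pos PX0 PY0 2%N) => //; rewrite hSY /Sx /xs /=; left; right.
have q3 : 0 < Qc pr 3 by apply: (@Qc_pos PX0 PY0 3%N) => //; rewrite hSY /Sx /xs /=; right.
have nd : forall i, (1 <= i <= 3)%N -> Pr pr i != 1.
  move=> i hi; apply/eqP => h; apply: nX; exists (xs i).
  by rewrite (rowX PX0 PY0 i hi) h.
have H : forall a, (forall c, exists i, [/\ (1 <= i <= 3)%N, a i != c & 0 < Pr pr i]) ->
             (forall c, exists j, [/\ (1 <= j <= 3)%N, a j != c & 0 < Qc pr j]) ->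
             CC pr a / Num.sqrt (AA pr a * BB pr a) = r.
  move=> a ha hb; rewrite -(Corr_g PX0 PY0); apply: Hg; first exact: mgf.
    split; first exact: (@Lfun_bdd _ _ (measurableT_comp (mgf a) mX) (fun w => gf_bdd a (X w))).
    exact: (@nondeg_gen X mX (Pr pr) a (rowX PX0 PY0) ha).
  split; first exact: (@Lfun_bdd _ _ (measurableT_comp (mgf a) mY) (fun w => gf_bdd a (Y w))).
  exact: (@nondeg_gen Y mY (Qc pr) a (colY PX0 PY0) hb).
case: (@alg_main _ pr r pr_ge0 (S9pr1 PX0 PY0) q1 q2 q3 (nd 1%N isT) (nd 2%N isT) (nd 3%N isT) H)
  => [r0|[h1 h2 h3]].
  by right; rewrite Cr.
left => A mA; rewrite (PXA PX0 PY0 _ mA) (PYA PX0 PY0 _ mA); congr (_%:E).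
rewrite /S9 /xs /=.
set c1 := \1_A x1; set c2 := \1_A x2; set c3 := \1_A x3.
transitivity (c1 * Pr pr 1 + c2 * Pr pr 2 + c3 * Pr pr 3); first by rewrite /Pr; ring.
by rewrite h1 h2 h3 /Qc; ring.
Qed.

End Meas.


Theorem lemma4 (d : measure_display) (T : measurableType d) (R : realType)
  (P : probability T R) (X Y : T -> R) (x1 x2 x3 : R) :
  x1 != x2 -> x1 != x3 -> x2 != x3 ->
  Supp P Y = [set x1; x2; x3] ->
  Supp P X `<=` Supp P Y ->
  IC P X Y ->
  same_distribution P X Y \/ Corr P X Y = 0.
Proof.
move=> n12 n13 n23 hSY hXY [r [_ hIC]].
have [[L2X nX] [[L2Y _] _]] := hIC.
have mX : measurable_fun setT X by move: L2X; rewrite inE => /andP[+ _]; rewrite inE.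
have mY : measurable_fun setT Y by move: L2Y; rewrite inE => /andP[+ _]; rewrite inE.
exact: (@inner d T R P X Y x1 x2 x3 mX mY n12 n13 n23 r hSY hXY nX hIC).
Qed.
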